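(* Let $F$, $H$, $X$, $\Omega$, $Q$ and the sequences generated by the IneIREG method be as described in the context. Suppose: $(\eta_k)$ is nonincreasing; $\alpha_0\in[0,1]$ and $(\alpha_k/\eta_k)$ is nonincreasing; $\lambda_k\in[\underline\lambda,\overline\lambda]$ for all $k\ge0$ with $0<\underline\lambda\le\overline\lambda\le1/(L_F+\eta_0L_H)$; and $\sum_{k=0}^\infty\delta_k\eta_k^{-1}<+\infty$. For $k\ge1$ let $\Lambda_k=\sum_{j=0}^{k-1}\lambda_j$ and $\overline y_k=\Lambda_k^{-1}\sum_{j=0}^{k-1}\lambda_jy_j$. Then for all $k\ge1$, $$-B_H\,\mathrm{dist}(\overline y_k,Q)\le\mathrm{Gap}(\overline y_k,H,Q)\le\frac{1}{k\eta_k}\Big(\frac{D_X^2}{2\underline\lambda}\Big)+\frac{\sum_{j=0}^{k-1}\delta_j\eta_j^{-1}}{k}\Big(\frac{1}{2\underline\lambda}\Big).$$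
   Context: Work in $\mathbb{R}^n$ with Euclidean inner product $\langle\cdot,\cdot\rangle$ and norm $\|\cdot\|$. The maps $F\colon \mathrm{Dom}\,F\to\mathbb{R}^n$ and $H\colon\mathrm{Dom}\,H\to\mathbb{R}^n$ are monotone and Lipschitz continuous with constants $L_F>0$ and $L_H>0$. $X$ is a nonempty compact convex set and $\Omega$ a nonempty closed convex set with $X\subset\Omega\subset\mathrm{Dom}\,F\cap\mathrm{Dom}\,H$; $P_X,P_\Omega$ denote orthogonal projections. $Q:=\{x\in X:\langle F(x),y-x\rangle\ge0\ \forall y\in X\}$ is assumed nonempty. $D_X:=\sup_{x,y\in X}\|x-y\|$, $B_H:=\sup_{x\in Q}\|H(x)\|$, $\mathrm{dist}(y,Q)$ is the Euclidean distance to $Q$. $\mathrm{Gap}(z,H,Q):=\sup_{x\in Q}\langle H(x),z-x\rangle$. IneIREG method: start with $x_0=x_{-1}\in X$; for $k=0,1,\dots$, with parameters $\alpha_k\ge0$, $\lambda_k>0$, $\eta_k>0$, set $w_k=x_k+\alpha_k(x_k-x_{k-1})$, $w'_k=P_\Omega(w_k)$, $y_k=P_X\big(w_k-\lambda_k(F(w'_k)+\eta_kH(w'_k))\big)$, $x_{k+1}=P_X\big(w_k-\lambda_k(F(y_k)+\eta_kH(y_k))\big)$. Also $\delta_k:=\alpha_k(1+\alpha_k)\|x_k-x_{k-1}\|^2$ for $k\ge0$. *)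

(* Defs.v *)
From HB Require Import structures.
From mathcomp Require Import all_boot all_order all_algebra.
From mathcomp Require Import all_classical all_reals all_analysis.
Set Implicit Arguments. Unset Strict Implicit. Unset Printing Implicit Defensive.
Import Order.TTheory GRing.Theory Num.Theory.
Local Open Scope classical_set_scope.
Local Open Scope ring_scope.

Section Defs.
Variables (R : realType) (n : nat).
Local Notation vec := 'rV[R]_n.

Definition dot (u v : vec) : R := \sum_(i < n) u ord0 i * v ord0 i.
Definition enorm (u : vec) : R := Num.sqrt (dot u u).

Definition vmonotone_on (D : set vec) (F : vec -> vec) :=
  forall x y, D x -> D y -> 0 <= dot (F x - F y) (x - y).
Definition vlipschitz_on (D : set vec) (L : R) (F : vec -> vec) :=
  forall x y, D x -> D y -> enorm (F x - F y) <= L * enorm (x - y).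

Definition vconvex_set (A : set vec) :=
  forall x y (t : R), A x -> A y -> 0 <= t <= 1 -> A (t *: x + (1 - t) *: y).

Definition is_orth_proj (A : set vec) (p : vec -> vec) :=
  forall z, A (p z) /\ forall y, A y -> enorm (z - p z) <= enorm (z - y).

Definition VIsol (F : vec -> vec) (X : set vec) : set vec :=
  [set x | X x /\ forall y, X y -> 0 <= dot (F x) (y - x)].

Definition vdiam (X : set vec) : R :=
  sup [set d | exists x y, X x /\ X y /\ d = enorm (x - y)].
Definition supnorm (H : vec -> vec) (Q : set vec) : R :=
  sup [set enorm (H x) | x in Q].
Definition distQ (y : vec) (Q : set vec) : R :=
  inf [set enorm (y - x) | x in Q].
Definition Gap (z : vec) (H : vec -> vec) (Q : set vec) : R :=
  sup [set dot (H x) (z - x) | x in Q].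

(* x_{k-1}, with the convention x_{-1} = x_0 *)
Definition xprev (x : nat -> vec) (k : nat) : vec :=
  match k with 0%N => x 0%N | k'.+1 => x k' end.

Definition delta (alpha : nat -> R) (x : nat -> vec) (k : nat) : R :=
  alpha k * (1 + alpha k) * enorm (x k - xprev x k) ^+ 2.

Definition noninc_seq (u : nat -> R) := forall k, u k.+1 <= u k.
End Defs.

(* Main.v *)
Require Import Defs.
From HB Require Import structures.
From mathcomp Require Import all_boot all_order all_algebra.
From mathcomp Require Import all_classical all_reals all_analysis.
From mathcomp Require Import ring lra.
Import Order.TTheory GRing.Theory Num.Theory.
Local Open Scope classical_set_scope.
Local Open Scope ring_scope.

Section Aux.
Variables (R : realType) (n : nat).
Local Notation vec := 'rV[R]_n.
Implicit Types u v z : vec.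

Lemma dotC u v : dot u v = dot v u.
Proof. by apply: eq_bigr => i _; rewrite mulrC. Qed.
Lemma dotDl u v z : dot (u + v) z = dot u z + dot v z.
Proof. by rewrite /dot -big_split; apply: eq_bigr => i _; rewrite !mxE mulrDl. Qed.
Lemma dotDr u v z : dot z (u + v) = dot z u + dot z v.
Proof. by rewrite dotC dotDl !(dotC z). Qed.
Lemma dotNl u v : dot (- u) v = - dot u v.
Proof. by rewrite /dot -sumrN; apply: eq_bigr => i _; rewrite !mxE mulNr. Qed.
Lemma dotNr u v : dot u (- v) = - dot u v.
Proof. by rewrite dotC dotNl dotC. Qed.
Lemma dotBl u v z : dot (u - v) z = dot u z - dot v z.
Proof. by rewrite dotDl dotNl. Qed.
Lemma dotBr u v z : dot z (u - v) = dot z u - dot z v.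
Proof. by rewrite dotDr dotNr. Qed.
Lemma dotZl a u v : dot (a *: u) v = a * dot u v.
Proof. by rewrite /dot mulr_sumr; apply: eq_bigr => i _; rewrite !mxE mulrA. Qed.
Lemma dotZr a u v : dot u (a *: v) = a * dot u v.
Proof. by rewrite dotC dotZl dotC. Qed.
Lemma dot0l u : dot 0 u = 0.
Proof. by rewrite /dot big1 // => i _; rewrite mxE mul0r. Qed.
Lemma dot_suml (I : finType) (f : I -> vec) v :
  dot (\sum_i f i) v = \sum_i dot (f i) v.
Proof. exact: (big_morph (fun u => dot u v) (fun a b => dotDl a b v) (dot0l v)). Qed.
Lemma dot_sumr (I : finType) (f : I -> vec) v :
  dot v (\sum_i f i) = \sum_i dot v (f i).
Proof. rewrite dotC dot_suml; apply: eq_bigr => i _; exact: dotC. Qed.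
Lemma dot_ge0 u : 0 <= dot u u.
Proof. by apply: sumr_ge0 => i _; rewrite -expr2 sqr_ge0. Qed.
Lemma enorm_ge0 u : 0 <= enorm u.
Proof. exact: sqrtr_ge0. Qed.
Lemma enorm2 u : enorm u ^+ 2 = dot u u.
Proof. by rewrite sqr_sqrtr // dot_ge0. Qed.
Lemma dot_eq0 u : dot u u = 0 -> u = 0.
Proof.
move=> /eqP; rewrite psumr_eq0 => [/allP H|i _]; last by rewrite -expr2 sqr_ge0.
apply/rowP => i; rewrite mxE; have := H i (mem_index_enum _).
by rewrite /= -expr2 sqrf_eq0 => /eqP.
Qed.

Lemma CS u v : dot u v <= enorm u * enorm v.
Proof.
set a := enorm v; set b := enorm u.
have ha : 0 <= a by exact: enorm_ge0.
have hb : 0 <= b by exact: enorm_ge0.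
have hu : dot u u = b ^+ 2 by rewrite enorm2.
have hv : dot v v = a ^+ 2 by rewrite enorm2.
have H0 := dot_ge0 (a *: u - b *: v).
rewrite !(dotBl, dotBr, dotZl, dotZr) (dotC v u) hu hv in H0.
have [a0|apos] := eqVneq a 0.
  have v0 : v = 0 by apply: dot_eq0; rewrite hv a0 expr2 mulr0.
  by rewrite v0 dotC dot0l a0 mulr0.
have [b0|bpos] := eqVneq b 0.
  have u0 : u = 0 by apply: dot_eq0; rewrite hu b0 expr2 mulr0.
  by rewrite u0 dot0l b0 mul0r.
have ab : 0 < a * b by rewrite mulr_gt0 // lt_def ?apos ?bpos.
have : a * b * dot u v <= a * b * (b * a) by nra.
by rewrite ler_pM2l // mulrC.
Qed.

Lemma dot_le_sq u v : dot u v <= (dot u u + dot v v) / 2.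
Proof.
have := dot_ge0 (u - v); rewrite !(dotBl, dotBr) (dotC v u); lra.
Qed.

Lemma enorm_triangle u v : enorm (u + v) <= enorm u + enorm v.
Proof.
have h : dot (u + v) (u + v) <= (enorm u + enorm v) ^+ 2.
  rewrite !(dotDl, dotDr) (dotC v u) -!enorm2; have := CS u v. nra.
have h1 : 0 <= enorm u + enorm v by rewrite addr_ge0 // enorm_ge0.
rewrite -(ler_pXn2r (_ : 0 < 2)%N) ?nnegrE ?enorm_ge0 // enorm2 //.
Qed.

Lemma sq_le u v : enorm u <= enorm v -> dot u u <= dot v v.
Proof.
move=> h; rewrite -!enorm2 !expr2; apply: ler_pM => //; exact: enorm_ge0.
Qed.

Lemma quad_aux u v (t : R) : 0 < t ->
  dot u u <= dot (u - t *: v) (u - t *: v) -> 2 * dot u v <= t * dot v v.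
Proof.
move=> t0; rewrite !(dotBl, dotBr, dotZl, dotZr) (dotC v u) => h.
have : t * (2 * dot u v) <= t * (t * dot v v) by nra.
by rewrite ler_pM2l.
Qed.

Lemma proj_char (A : set vec) p z y : vconvex_set A -> is_orth_proj A p -> A y ->
  dot (z - p z) (y - p z) <= 0.
Proof.
move=> cA pA Ay; set u := z - p z; set v := y - p z.
have key : forall t : R, 0 < t <= 1 -> 2 * dot u v <= t * dot v v.
  move=> t /andP[t0 t1].
  have Ap : A (t *: y + (1 - t) *: p z) by apply: cA => //; [case: (pA z)|rewrite ltW].
  have := (pA z).2 _ Ap => /sq_le.
  have -> : z - (t *: y + (1 - t) *: p z) = u - t *: v.
    by apply/rowP => i; rewrite !mxE; ring.
  exact: quad_aux.
rewrite leNgt; apply/negP => huv.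
have hv := dot_ge0 v.
set t := dot u v / (dot u v + dot v v).
have hden : 0 < dot u v + dot v v by lra.
have t0 : 0 < t by rewrite divr_gt0.
have t1 : t <= 1 by rewrite ler_pdivrMr // mul1r; lra.
have := key t; rewrite t0 t1 => /(_ isT).
rewrite /t mulrAC ler_pdivlMr //. nra.
Qed.

Ltac normdot := repeat match goal with
  | |- context[@dot ?R ?n ?a ?b] => match goal with
       |- context[@dot R n b a] => tryif constr_eq a b then fail else rewrite (dotC b a) end end.

Lemma eg_step (F H : vec -> vec) (LF LH lam eta : R) (w w' y xp q : vec) :
  0 <= LF -> 0 <= LH -> 0 < lam -> 0 < eta -> lam * (LF + eta * LH) <= 1 ->
  dot (w - lam *: (F w' + eta *: H w') - y) (xp - y) <= 0 ->
  dot (w - lam *: (F y + eta *: H y) - xp) (q - xp) <= 0 ->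
  dot (w' - y) (w' - y) <= dot (w - y) (w - y) ->
  enorm (F w' - F y) <= LF * enorm (w' - y) ->
  enorm (H w' - H y) <= LH * enorm (w' - y) ->
  0 <= dot (F y - F q) (y - q) -> 0 <= dot (H y - H q) (y - q) ->
  0 <= dot (F q) (y - q) ->
  dot (xp - q) (xp - q) <= dot (w - q) (w - q) - 2 * lam * eta * dot (H q) (y - q).
Proof.
move=> LF0 LH0 l0 e0 hL hy hx hw lF lH mF mH qs.
have K : 2 * lam * dot ((F w' + eta *: H w') - (F y + eta *: H y)) (xp - y)
     <= dot (w - y) (w - y) + dot (xp - y) (xp - y).
  have -> : (F w' + eta *: H w') - (F y + eta *: H y) = (F w' - F y) + eta *: (H w' - H y).
    by apply/rowP => i; rewrite !mxE; ring.
  rewrite dotDl dotZl.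
  have c1 := CS (F w' - F y) (xp - y).
  have c2 := CS (H w' - H y) (xp - y).
  set e1 := enorm (w' - y) in lF lH hw; set e2 := enorm (xp - y) in c1 c2.
  have e10 : 0 <= e1 by exact: enorm_ge0.
  have e20 : 0 <= e2 by exact: enorm_ge0.
  have f0 := enorm_ge0 (F w' - F y); have h0 := enorm_ge0 (H w' - H y).
  have d1 : enorm (F w' - F y) * e2 <= LF * e1 * e2 by rewrite ler_wpM2r.
  have d2 : enorm (H w' - H y) * e2 <= LH * e1 * e2 by rewrite ler_wpM2r.
  have s1 : dot (w' - y) (w' - y) = e1 ^+ 2 by rewrite enorm2.
  have s2 : dot (xp - y) (xp - y) = e2 ^+ 2 by rewrite enorm2.
  rewrite s2; rewrite s1 in hw.
  have p12 : 0 <= e1 * e2 by exact: mulr_ge0.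
  have g1 : lam * (LF + eta * LH) * (e1 * e2) <= e1 * e2 by rewrite ler_piMl // mulr_ge0 // ?addr_ge0 ?mulr_ge0 // ltW.
  have g2 : 2 * (e1 * e2) <= e1 ^+ 2 + e2 ^+ 2 by have := sqr_ge0 (e1 - e2); rewrite sqrrB; lra.
  have g3 : lam * dot (F w' - F y) (xp - y) <= lam * (LF * e1 * e2).
    by apply: ler_wpM2l; [exact: ltW | exact: le_trans c1 d1].
  have g4 : lam * eta * dot (H w' - H y) (xp - y) <= lam * eta * (LH * e1 * e2).
    by apply: ler_wpM2l; [rewrite mulr_ge0 // ltW | exact: le_trans c2 d2].
  have -> : 2 * lam * (dot (F w' - F y) (xp - y) + eta * dot (H w' - H y) (xp - y))
    = 2 * (lam * dot (F w' - F y) (xp - y)) + 2 * (lam * eta * dot (H w' - H y) (xp - y)) by ring.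
  have ee : lam * (LF + eta * LH) * (e1 * e2) = lam * (LF * e1 * e2) + lam * eta * (LH * e1 * e2) by ring.
  rewrite ee in g1.
  lra.
have mF' := mulr_ge0 (ltW l0) mF.
have mH' := mulr_ge0 (mulr_ge0 (ltW l0) (ltW e0)) mH.
have qs' := mulr_ge0 (ltW l0) qs.
move: hy hx hw mF' mH' qs' K.
rewrite !(dotDl, dotDr, dotNl, dotNr, dotZl, dotZr); normdot.
move=> *; nra.
Qed.

Lemma enormN u : enorm (- u) = enorm u.
Proof. by rewrite /enorm dotNl dotNr opprK. Qed.

Lemma proj_closer (A : set vec) p z y : vconvex_set A -> is_orth_proj A p -> A y ->
  dot (p z - y) (p z - y) <= dot (z - y) (z - y).
Proof.
move=> cA pA Ay; have h := @proj_char A p z y cA pA Ay.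
have h2 := dot_ge0 (z - p z).
move: h h2; rewrite !(dotDl, dotDr, dotNl, dotNr); normdot; move=> *; lra.
Qed.

Lemma inertia (xk xp q : vec) (al : R) :
  dot (xk + al *: (xk - xp) - q) (xk + al *: (xk - xp) - q) =
  (1 + al) * dot (xk - q) (xk - q) - al * dot (xp - q) (xp - q)
  + al * (1 + al) * dot (xk - xp) (xk - xp).
Proof. rewrite !(dotDl, dotDr, dotNl, dotNr, dotZl, dotZr); normdot; ring. Qed.

End Aux.
Arguments dotC {R n}.
Arguments dotDl {R n}.
Arguments dotDr {R n}.
Arguments dotNl {R n}.
Arguments dotNr {R n}.
Arguments dotBl {R n}.
Arguments dotBr {R n}.
Arguments dotZl {R n}.
Arguments dotZr {R n}.
Arguments dot0l {R n}.
Arguments dot_suml {R n}.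
Arguments dot_sumr {R n}.
Arguments dot_ge0 {R n}.
Arguments enorm_ge0 {R n}.
Arguments enorm2 {R n}.
Arguments dot_eq0 {R n}.
Arguments CS {R n}.
Arguments dot_le_sq {R n}.
Arguments enorm_triangle {R n}.
Arguments sq_le {R n}.
Arguments quad_aux {R n}.
Arguments proj_char {R n}.
Arguments eg_step {R n}.
Arguments enormN {R n}.
Arguments proj_closer {R n}.
Arguments inertia {R n}.

Lemma sum_inv (R : realType) (eta al c dl phi psi : nat -> R) (D2 : R) :
  (forall j, 0 < eta j) -> (forall j, eta j.+1 <= eta j) ->
  (forall j, al j.+1 / eta j.+1 <= al j / eta j) -> al 0%N <= 1 ->
  (forall j, 0 <= al j) -> (forall j, 0 <= phi j <= D2) ->
  psi 0%N = phi 0%N -> (forall j, psi j.+1 = phi j) ->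
  (forall j, eta j * c j <= (1 + al j) * phi j - al j * psi j + dl j - phi j.+1) ->
  forall k, (1 <= k)%N ->
  \sum_(j < k) c j <= D2 / eta k + \sum_(j < k) dl j / eta j.
Proof.
move=> e0 edec aedec al1 al0 phiD ps0 psS st.
have hc : forall j, c j <= (eta j)^-1 * ((1 + al j) * phi j - al j * psi j + dl j - phi j.+1).
  move=> j; rewrite -[c j](mulKf (lt0r_neq0 (e0 j))); apply: ler_wpM2l; last exact: st.
  by rewrite invr_ge0 ltW.
have claim : forall m, \sum_(j < m.+1) (c j - dl j / eta j) <=
    (D2 - phi m.+1) / eta m + al m / eta m * (phi m - D2).
  elim=> [|m IH].
    rewrite big_ord_recr big_ord0 /= add0r.
    have := hc 0%N; rewrite ps0.
    have a0 : 0 < (eta 0%N)^-1 by rewrite invr_gt0.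
    have := phiD 0%N; have := phiD 1%N.
    move: a0; set a := (eta 0%N)^-1 => a0 p1 p0 h.
    have h2 : 0 <= a * ((1 - al 0%N) * (D2 - phi 0%N)).
      by apply: mulr_ge0; [lra | apply: mulr_ge0; lra].
    nra.
  rewrite big_ord_recr /=.
  have := hc m.+1; rewrite psS.
  have am : 0 < (eta m)^-1 by rewrite invr_gt0.
  have am1 : (eta m)^-1 <= (eta m.+1)^-1 by rewrite lef_pV2 ?posrE.
  have hb := aedec m.
  have := phiD m; have := phiD m.+1; have := phiD m.+2.
  move: am am1 hb IH; set a := (eta m)^-1; set a' := (eta m.+1)^-1.
  set S := \sum_(i < m.+1) _.
  move=> am am1 hb IH p2 p1 p0 h.
  have h3 : 0 <= (a' - a) * (D2 - phi m.+1) by apply: mulr_ge0; lra.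
  have h4 : 0 <= (al m * a - al m.+1 * a') * (D2 - phi m) by apply: mulr_ge0; lra.
  nra.
case=> [//|m] _.
have := claim m; rewrite sumrB.
have am : 0 < (eta m)^-1 by rewrite invr_gt0.
have am1 : (eta m)^-1 <= (eta m.+1)^-1 by rewrite lef_pV2 ?posrE.
have hb : 0 <= al m / eta m by rewrite mulr_ge0 // invr_ge0 ltW.
have := phiD m; have := phiD m.+1.
move: am am1 hb; set a := (eta m)^-1; set a' := (eta m.+1)^-1 => am am1 hb p1 p0 h.
have h5 : 0 <= al m * a * (D2 - phi m) by apply: mulr_ge0 => //; lra.
have h6 : 0 <= a * phi m.+1 by apply: mulr_ge0 => //; lra.
have h7 : a * D2 <= a' * D2 by apply: ler_wpM2r; lra.
nra.
Qed.

Theorem proposition3p3 (R : realType) (n : nat)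
  (F H : 'rV[R]_n -> 'rV[R]_n) (DomF DomH : set 'rV[R]_n) (LF LH : R)
  (X Omega : set 'rV[R]_n) (PX POm : 'rV[R]_n -> 'rV[R]_n)
  (alpha lambda eta : nat -> R) (lam_lo lam_hi : R)
  (x w w' y : nat -> 'rV[R]_n) :
  0 < LF -> 0 < LH ->
  vmonotone_on DomF F -> vlipschitz_on DomF LF F ->
  vmonotone_on DomH H -> vlipschitz_on DomH LH H ->
  X !=set0 -> @compact ('rV[R]_n : normedModType R) X -> vconvex_set X ->
  Omega !=set0 -> @closed ('rV[R]_n : normedModType R) Omega -> vconvex_set Omega ->
  X `<=` Omega -> Omega `<=` DomF `&` DomH ->
  is_orth_proj X PX -> is_orth_proj Omega POm ->
  VIsol F X !=set0 ->
  (* IneIREG iteration, with x_{-1} = x_0 *)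
  X (x 0%N) ->
  (forall k, 0 <= alpha k) -> (forall k, 0 < lambda k) -> (forall k, 0 < eta k) ->
  (forall k, w k = x k + alpha k *: (x k - xprev x k)) ->
  (forall k, w' k = POm (w k)) ->
  (forall k, y k = PX (w k - lambda k *: (F (w' k) + eta k *: H (w' k)))) ->
  (forall k, x k.+1 = PX (w k - lambda k *: (F (y k) + eta k *: H (y k)))) ->
  (* assumptions of the proposition *)
  noninc_seq eta ->
  0 <= alpha 0%N <= 1 ->
  noninc_seq (fun k => alpha k / eta k) ->
  0 < lam_lo -> lam_lo <= lam_hi -> lam_hi <= 1 / (LF + eta 0%N * LH) ->
  (forall k, lam_lo <= lambda k <= lam_hi) ->
  (\sum_(0 <= k <oo) ((delta alpha x k / eta k)%:E) < +oo)%E ->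
  forall k : nat, (1 <= k)%N ->
    let Q := VIsol F X in
    let Lam := \sum_(j < k) lambda j in
    let ybar := Lam^-1 *: \sum_(j < k) lambda j *: y j in
    - supnorm H Q * distQ ybar Q <= Gap ybar H Q /\
    Gap ybar H Q <=
      (k%:R * eta k)^-1 * (vdiam X ^+ 2 / (2 * lam_lo))
      + (\sum_(j < k) delta alpha x j / eta j) / k%:R * (1 / (2 * lam_lo)).
Proof.
move=> LF0 LH0 monF lipF monH lipH Xne cX cvX Omne clO cvO XO OD pX pO Qne X0
  al0 lam0 eta0 hw hw' hy hx etadec al01 aedec lamlo0 lamlohi lamhi lamb _ k k1 Q Lam ybar.
have Xx : forall j, X (x j) by case=> // j; rewrite hx; exact: (pX _).1.
have Xy : forall j, X (y j) by move=> j; rewrite hy; exact: (pX _).1.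
have Ow' : forall j, Omega (w' j) by move=> j; rewrite hw'; exact: (pO _).1.
set D := vdiam X.
have [B hB] : exists B, forall a b, X a -> X b -> enorm (a - b) <= B.
  case: (compact_bounded cX) => M [Mreal HM].
  have HM1 : forall v, X v -> `|v| <= M + 1 by apply: HM; rewrite ltrDl.
  have ent : forall v i, X v -> v ord0 i * v ord0 i <= (M + 1) * (M + 1).
    move=> v i Xv; have Hv := HM1 v Xv.
    have Hi : `|v ord0 i| <= M + 1.
      apply: le_trans Hv.
      have /mapP[j Hj ->] : `|v ord0 i| \in [seq `|v z.1 z.2| | z : 'I_1 * 'I_n].
        by apply/mapP; exists (ord0, i) => //=; rewrite mem_enum.
      by rewrite [leRHS]/Num.Def.normr /= mx_normrE; apply/bigmax_geP; right => /=; exists j.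
    apply: le_trans (ler_norm _) _; rewrite normrM.
    by apply: ler_pM => //; apply: normr_ge0.
  have en : forall v, X v -> enorm v <= Num.sqrt (\sum_(i < n) (M + 1) * (M + 1)).
    move=> v Xv; rewrite /enorm ler_sqrt; last by apply: sumr_ge0 => i _; rewrite -expr2 sqr_ge0.
    by apply: ler_sum => i _; apply: ent.
  exists (2 * Num.sqrt (\sum_(i < n) (M + 1) * (M + 1))) => a b Xa Xb.
  apply: le_trans (enorm_triangle _ _) _; rewrite enormN.
  have := en a Xa; have := en b Xb; lra.
have hsD : has_sup [set d | exists a b, X a /\ X b /\ d = enorm (a - b)].
  split; first by exists (enorm (x 0%N - x 0%N)); exists (x 0%N), (x 0%N).
  by exists B => d [a [b [Xa [Xb ->]]]]; apply: hB.
have hD : forall a b, X a -> X b -> enorm (a - b) <= D.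
  by move=> a b Xa Xb; apply: (sup_upper_bound hsD); exists a, b.
have D0 : 0 <= D by apply: le_trans (hD _ _ (X0) (X0)); exact: enorm_ge0.
have hD2 : forall a b, X a -> X b -> 0 <= dot (a - b) (a - b) <= D ^+ 2.
  move=> a b Xa Xb; rewrite dot_ge0 -enorm2 /=; rewrite !expr2; apply: ler_pM => //;
  [exact: enorm_ge0 | exact: enorm_ge0 | exact: hD | exact: hD].
have etale0 : forall j, eta j <= eta 0%N.
  by elim=> // j IH; exact: le_trans (etadec j) IH.
have hL : forall j, lambda j * (LF + eta j * LH) <= 1.
  move=> j; have c0 : 0 < LF + eta 0%N * LH by rewrite addr_gt0 // mulr_gt0.
  have h1 : lam_hi * (LF + eta 0%N * LH) <= 1 by rewrite -ler_pdivlMr.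
  have /andP[_ lj] := lamb j.
  have h2 : LF + eta j * LH <= LF + eta 0%N * LH by rewrite lerD2l ler_wpM2r // ltW.
  apply: le_trans h1; apply: ler_pM => //; first exact: ltW.
  by rewrite addr_ge0 ?mulr_ge0 // ltW.
have al1 : alpha 0%N <= 1 by case/andP: al01.
have dl0 : forall j, 0 <= delta alpha x j.
  move=> j; rewrite /delta; apply: mulr_ge0; last by rewrite enorm2 dot_ge0.
  by apply: mulr_ge0 => //; rewrite addr_ge0.
have Lamlo : k%:R * lam_lo <= Lam.
  rewrite mulr_natl -(card_ord k) -sumr_const; apply: ler_sum => j _.
  by case/andP: (lamb j).
have k0 : (0 : R) < k%:R by rewrite ltr0n.
have Lam0 : 0 < Lam by apply: lt_le_trans Lamlo; rewrite mulr_gt0.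
have main : forall q, Q q -> dot (H q) (ybar - q) <=
    (k%:R * eta k)^-1 * (D ^+ 2 / (2 * lam_lo))
      + (\sum_(j < k) delta alpha x j / eta j) / k%:R * (1 / (2 * lam_lo)).
  move=> q Qq; have Xq : X q := Qq.1.
  have Dq : (DomF `&` DomH) q := OD _ (XO _ Xq).
  pose phi := fun j => dot (x j - q) (x j - q).
  pose psi := fun j => dot (xprev x j - q) (xprev x j - q).
  pose c := fun j => 2 * lambda j * dot (H q) (y j - q).
  have st : forall j, eta j * c j <=
      (1 + alpha j) * phi j - alpha j * psi j + delta alpha x j - phi j.+1.
    move=> j.
    have Dy : (DomF `&` DomH) (y j) := OD _ (XO _ (Xy j)).
    have Dw : (DomF `&` DomH) (w' j) := OD _ (Ow' j).
    have hy1 : dot (w j - lambda j *: (F (w' j) + eta j *: H (w' j)) - y j) (x j.+1 - y j) <= 0.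
      by rewrite (hy j); apply: proj_char cvX pX (Xx _).
    have hx1 : dot (w j - lambda j *: (F (y j) + eta j *: H (y j)) - x j.+1) (q - x j.+1) <= 0.
      by rewrite (hx j); apply: proj_char cvX pX Xq.
    have hw1 : dot (w' j - y j) (w' j - y j) <= dot (w j - y j) (w j - y j).
      by rewrite hw'; apply: proj_closer cvO pO (XO _ (Xy j)).
    have E := eg_step _ _ _ _ _ _ _ _ _ _ _ (ltW LF0) (ltW LH0) (lam0 j) (eta0 j) (hL j) hy1 hx1 hw1
      (lipF _ _ Dw.1 Dy.1) (lipH _ _ Dw.2 Dy.2) (monF _ _ Dy.1 Dq.1) (monH _ _ Dy.2 Dq.2)
      (Qq.2 _ (Xy j)).
    rewrite hw inertia in E.
    rewrite /delta enorm2 /phi /psi /c.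
    have -> : eta j * (2 * lambda j * dot (H q) (y j - q)) =
      2 * lambda j * eta j * dot (H q) (y j - q) by ring.
    lra.
  have phiD : forall j, 0 <= phi j <= D ^+ 2 by move=> j; exact: hD2.
  have S := @sum_inv R eta alpha c (delta alpha x) phi psi (D ^+ 2) eta0 etadec aedec al1 al0 phiD (erefl _) (fun j => erefl _) st k k1.
  have e1 : \sum_(j < k) lambda j *: (y j - q) = \sum_(j < k) lambda j *: y j - Lam *: q.
    by rewrite /Lam scaler_suml -sumrB; apply: eq_bigr => j _; rewrite scalerBr.
  have e2 : ybar - q = Lam^-1 *: \sum_(j < k) lambda j *: (y j - q).
    by rewrite e1 scalerBr scalerA mulVf ?scale1r // lt0r_neq0.
  rewrite e2 dotZr dot_sumr.
  under eq_bigr do rewrite dotZr.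
  have eS : \sum_(j < k) c j = 2 * \sum_(j < k) lambda j * dot (H q) (y j - q).
    by rewrite mulr_sumr; apply: eq_bigr => j _; rewrite /c mulrA.
  rewrite eS in S.
  move: S; set P := \sum_(j < k) _ * _; set T2 := \sum_(j < k) _ / _ => S.
  have T20 : 0 <= T2 by apply: sumr_ge0 => j _; rewrite mulr_ge0 // invr_ge0 ltW.
  have ek := eta0 k.
  have D2e : 0 <= D ^+ 2 / eta k by rewrite mulr_ge0 ?sqr_ge0 // invr_ge0 ltW.
  have -> : (k%:R * eta k)^-1 * (D ^+ 2 / (2 * lam_lo)) + T2 / k%:R * (1 / (2 * lam_lo))
    = (k%:R * lam_lo)^-1 * ((D ^+ 2 / eta k + T2) / 2).
    by field; rewrite !lt0r_neq0.
  apply: (@le_trans _ _ (Lam^-1 * ((D ^+ 2 / eta k + T2) / 2))).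
    by apply: ler_wpM2l; [rewrite invr_ge0 ltW | lra].
  apply: ler_wpM2r; first lra.
  by rewrite lef_pV2 ?posrE // mulr_gt0.
have hsG : has_sup [set dot (H z) (ybar - z) | z in Q].
  split; first by case: Qne => q Qq; exists (dot (H q) (ybar - q)); exists q.
  by eexists => _ [z Qz <-]; exact: main.
have hG : forall z, Q z -> dot (H z) (ybar - z) <= Gap ybar H Q.
  by move=> z Qz; apply: (sup_upper_bound hsG); exists z.
split; last first.
  apply: ge_sup; first by case: Qne => q Qq; exists (dot (H q) (ybar - q)); exists q.
  by move=> _ [z Qz <-]; exact: main.
case: Qne => q0 Qq0.
have Xq0 : X q0 := Qq0.1.
have hsB : has_sup [set enorm (H z) | z in Q].
  split; first by exists (enorm (H q0)); exists q0.
  exists (enorm (H q0) + LH * D) => _ [z Qz <-].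
  have Dz := OD _ (XO _ Qz.1); have D0' := OD _ (XO _ Xq0).
  have -> : H z = (H z - H q0) + H q0 by rewrite subrK.
  apply: le_trans (enorm_triangle _ _) _.
  have h1 := lipH _ _ Dz.2 D0'.2.
  have h2 : LH * enorm (z - q0) <= LH * D by apply: (ler_wpM2l (ltW LH0)); exact: (hD _ _ Qz.1 Xq0).
  lra.
have hBx : forall z, Q z -> enorm (H z) <= supnorm H Q.
  by move=> z Qz; apply: (sup_upper_bound hsB); exists z.
have B0 : 0 <= supnorm H Q by apply: le_trans (hBx _ Qq0); exact: enorm_ge0.
have low : forall z, Q z -> - (supnorm H Q * enorm (ybar - z)) <= Gap ybar H Q.
  move=> z Qz; apply: le_trans (hG _ Qz).
  have := CS (- H z) (ybar - z); rewrite dotNl enormN => h.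
  have h2 : enorm (H z) * enorm (ybar - z) <= supnorm H Q * enorm (ybar - z).
    by apply: ler_wpM2r; [exact: enorm_ge0 | exact: hBx].
  lra.
have [B00|Bpos] := eqVneq (supnorm H Q) 0.
  by have := low _ Qq0; rewrite B00 !(oppr0, mul0r).
have Bp : 0 < supnorm H Q by rewrite lt_def Bpos B0.
have hinf : - Gap ybar H Q / supnorm H Q <= distQ ybar Q.
  apply: lb_le_inf; first by exists (enorm (ybar - q0)); exists q0.
  move=> _ [z Qz <-]; rewrite ler_pdivrMr // mulrC; have := low _ Qz; lra.
have := ler_wpM2l (ltW Bp) hinf.
have -> : supnorm H Q * (- Gap ybar H Q / supnorm H Q) = - Gap ybar H Q.
  by field; exact: lt0r_neq0.
rewrite mulNr; lra.
Qed.
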